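(* Let $f$ be an L-additive arithmetic function whose associated completely multiplicative function $h_f$ is nonzero-valued, and let $\Lambda_f$ be the generalized von Mangoldt function associated to $f$. Then for every positive integer $n$, $$\Lambda_f(n)=\sum_{d\mid n}\mu\!\left(\frac{n}{d}\right)\frac{f(d)}{h_f(d)}=-\sum_{d\mid n}\frac{\mu(d)f(d)}{h_f(d)},$$ i.e. $\Lambda_f=\mu\ast\frac{f}{h_f}=-1\ast\frac{\mu f}{h_f}$.
   Context: An arithmetic function $f:\mathbb{N}\to\mathbb{C}$ is L-additive if there is a completely multiplicative function $h_f$ such that $f(mn)=f(m)h_f(n)+f(n)h_f(m)$ for all positive integers $m,n$; such an $h_f$ is fixed. $\Lambda_f(n)=\frac{f(p)}{h_f(p)}$ if $n=p^k$ for some prime $p$ and integer $k\geq 1$, and $\Lambda_f(n)=0$ otherwise. $\mu$ is the Möbius function, $1$ denotes the constant function $1(n)=1$, $\ast$ is Dirichlet convolution $(F\ast G)(n)=\sum_{d\mid n}F(d)G(n/d)$, and quotients/products of arithmetic functions such as $f/h_f$, $\mu f/h_f$ are pointwise. *)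

(* Defs.v *)
(* Arithmetic functions are modelled as nat -> algC;
   only their values at positive integers matter. *)
From mathcomp Require Import all_boot all_order all_algebra all_field.
Set Implicit Arguments. Unset Strict Implicit. Unset Printing Implicit Defensive.
Import GRing.Theory Num.Theory.
Local Open Scope ring_scope.

Definition arith := nat -> algC.

Definition completely_multiplicative (h : arith) : Prop :=
  h 1%N = 1 /\ forall m n : nat, (0 < m)%N -> (0 < n)%N -> h (m * n)%N = h m * h n.

Definition L_additive_wrt (f h : arith) : Prop :=
  completely_multiplicative h /\
  forall m n : nat, (0 < m)%N -> (0 < n)%N ->
    f (m * n)%N = f m * h n + f n * h m.

Definition moebius (n : nat) : algC :=
  if [forall p : 'I_n.+1, (logn p n <= 1)%N]
  then (-1) ^+ size (primes n) else 0.

(* generalized von Mangoldt function: f(p)/h(p) if n = p^k, k >= 1, else 0 *)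
Definition vonMangoldt_f (f h : arith) (n : nat) : algC :=
  if (1 < n)%N && (size (primes n) == 1%N)
  then f (pdiv n) / h (pdiv n) else 0.

Definition dconv (F G : arith) (n : nat) : algC :=
  \sum_(d <- divisors n) F d * G (n %/ d)%N.

Definition const1 : arith := fun _ => 1.

(* Main.v *)
Require Import Defs.
From mathcomp Require Import all_boot all_order all_algebra all_field.
Import GRing.Theory Num.Theory.
Local Open Scope ring_scope.
Lemma divisors_split (p a m : nat) : prime p -> (0 < m)%N -> ~~ (p %| m)%N ->
  perm_eq (divisors (p ^ a * m))
    [seq (p ^ i * d)%N | i <- index_iota 0 a.+1, d <- divisors m].
Proof.
move=> pp m0 npm.
have pa0 : (0 < p ^ a * m)%N by rewrite muln_gt0 expn_gt0 (prime_gt0 pp).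
have cpm : forall d, d \in divisors m -> coprime p d.
  move=> d; rewrite -dvdn_divisors // => dm.
  by apply: coprime_dvdr dm _; rewrite prime_coprime.
apply: uniq_perm; first exact: divisors_uniq.
  apply: allpairs_uniq; rewrite ?iota_uniq ?divisors_uniq //.
  move=> x y Hx Hy E.
  case/allpairsP: Hx => [[i' d'] [_ /= Hd Ex]]; subst x.
  case/allpairsP: Hy => [[j' e'] [_ /= He Ey]]; subst y.
  move: E => /=.
  move=> E.
  have d0 : (0 < d')%N by move: Hd; rewrite -dvdn_divisors // => /dvdn_gt0; apply.
  have e0 : (0 < e')%N by move: He; rewrite -dvdn_divisors // => /dvdn_gt0; apply.
  have Eij : i' = j'.
    have := congr1 (logn p) E.
    by rewrite !lognM ?expn_gt0 ?(prime_gt0 pp) // !pfactorK // !logn_coprime ?cpm // !addn0.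
  subst j'; congr (_, _).
  by apply/eqP; rewrite -(eqn_pmul2l (_ : 0 < p ^ i')%N) ?E // expn_gt0 (prime_gt0 pp).
move=> x; rewrite -dvdn_divisors //; apply/idP/allpairsP.
  move=> xd.
  have x0 : (0 < x)%N by apply: dvdn_gt0 xd.
  have [d cpd xE] := pfactor_coprime pp x0.
  exists (logn p x, d); split => /=.
  - rewrite mem_index_iota /= ltnS.
    have := dvdn_leq_log p pa0 xd.
    by rewrite lognM ?expn_gt0 ?(prime_gt0 pp) // pfactorK // (@logn_coprime p m) ?prime_coprime // addn0.
  - rewrite -dvdn_divisors //.
    have : (d %| p ^ a * m)%N by apply: dvdn_trans xd; rewrite xE dvdn_mulr.
    by rewrite Gauss_dvdr // coprime_sym coprimeXl.
  - by rewrite mulnC.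
move=> [[i d] [/= Hi Hd ->]].
apply: dvdn_mul; last by rewrite dvdn_divisors.
by apply: dvdn_exp2l; move: Hi; rewrite mem_index_iota ltnS.
Qed.

Lemma divnKK (n d : nat) : (0 < n)%N -> (d %| n)%N -> (n %/ (n %/ d))%N = d.
Proof.
move=> n0 dn; have d0 : (0 < d)%N by apply: dvdn_gt0 dn.
by rewrite -{1}(divnK dn) mulKn // divn_gt0 // dvdn_leq.
Qed.

Lemma divisors_rev (F : nat -> algC) n : (0 < n)%N ->
  \sum_(d <- divisors n) F (n %/ d)%N = \sum_(d <- divisors n) F d.
Proof.
move=> n0; rewrite -(big_map (fun d => n %/ d)%N predT F).
apply: perm_big; apply: uniq_perm; last 2 first.
- exact: divisors_uniq.
- move=> x; apply/mapP/idP.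
    move=> [d]; rewrite -!dvdn_divisors // => dn ->; exact: dvdn_div.
  rewrite -dvdn_divisors // => xn; exists (n %/ x)%N; first by rewrite -dvdn_divisors // dvdn_div.
  have x0 : (0 < x)%N by apply: dvdn_gt0 xn.
  by rewrite -{1}(divnK xn) mulKn // divn_gt0 // dvdn_leq.
rewrite map_inj_in_uniq ?divisors_uniq // => d e; rewrite -!dvdn_divisors // => dn en E.
by rewrite -(@divnKK n d n0 dn) E divnKK.
Qed.
Lemma sqfP {n : nat} : (0 < n)%N ->
  reflect (forall q, (logn q n <= 1)%N) [forall q : 'I_n.+1, (logn q n <= 1)%N].
Proof.
move=> n0; apply: (iffP forallP) => H q; last exact: H.
case: (ltnP q n.+1) => qn; first exact: (H (Ordinal qn)).
suff -> : logn q n = 0%N by [].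
apply/eqP; rewrite -leqn0 leqNgt logn_gt0 mem_primes n0 /=.
by apply/negP => /andP [_ /(dvdn_leq n0)]; rewrite leqNgt qn.
Qed.

Lemma mu1 : moebius 1 = 1.
Proof.
rewrite /moebius; case: ifP => [_|/negP []]; first by rewrite expr0.
by apply/sqfP => // q; rewrite logn1.
Qed.

Lemma mu_pmul (p d : nat) : prime p -> (0 < d)%N -> ~~ (p %| d)%N ->
  moebius (p * d) = - moebius d.
Proof.
move=> pp d0 npd.
have p0 := prime_gt0 pp.
have pd0 : (0 < p * d)%N by rewrite muln_gt0 p0.
have lg q : logn q (p * d) = ((q == p) + logn q d)%N by rewrite lognM // logn_prime.
have lpd : logn p d = 0%N by rewrite logn_coprime // prime_coprime.
have E : [forall q : 'I_(p * d).+1, (logn q (p * d) <= 1)%N] =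
         [forall q : 'I_d.+1, (logn q d <= 1)%N].
  apply/sqfP/sqfP => // H q.
    by apply: leq_trans (H q); rewrite lg leq_addl.
  rewrite lg; case: eqP => [->|_]; first by rewrite lpd.
  exact: H.
have S : size (primes (p * d)) = (size (primes d)).+1.
  have : perm_eq (primes (p * d)) (p :: primes d).
    apply: uniq_perm; rewrite ?primes_uniq //=.
      by rewrite primes_uniq andbT mem_primes (negbTE npd) !andbF.
    by move=> q; rewrite primesM // primes_prime // !in_cons in_nil orbF.
  by move/perm_size.
rewrite /moebius E S; case: ifP => _; last by rewrite oppr0.
by rewrite exprS mulN1r.
Qed.

Lemma mu_p2 (p i d : nat) : prime p -> (0 < d)%N -> (1 < i)%N ->
  moebius (p ^ i * d) = 0.
Proof.
move=> pp d0 i1.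
have pid0 : (0 < p ^ i * d)%N by rewrite muln_gt0 expn_gt0 prime_gt0.
rewrite /moebius; case: (sqfP pid0) => // /(_ p).
by rewrite lognM ?expn_gt0 ?(prime_gt0 pp) // pfactorK // leqNgt (leq_trans i1) ?leq_addr.
Qed.

Lemma split_sum (F : nat -> algC) (p a m : nat) : prime p -> (0 < m)%N -> ~~ (p %| m)%N ->
  \sum_(d <- divisors (p ^ a * m)) F d
  = \sum_(0 <= i < a.+1) \sum_(d <- divisors m) F (p ^ i * d)%N.
Proof.
move=> pp m0 npm; rewrite (perm_big _ (@divisors_split p a m pp m0 npm)).
by rewrite big_allpairs_dep.
Qed.

Lemma mu_split (G : nat -> algC) (p a m : nat) : prime p -> (0 < m)%N -> ~~ (p %| m)%N ->
  (0 < a)%N ->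
  \sum_(d <- divisors (p ^ a * m)) moebius d * G d
  = \sum_(d <- divisors m) moebius d * (G d - G (p * d)%N).
Proof.
move=> pp m0 npm; case: a => // a _.
rewrite split_sum // big_nat_recl // big_nat_recl //.
rewrite addrA [X in _ + X]big1 ?addr0; last first.
  move=> i _; rewrite big1_seq // => d /andP [_ dm].
  have d0 : (0 < d)%N by move: dm; rewrite -dvdn_divisors // => /dvdn_gt0; apply.
  by rewrite mu_p2 ?mul0r.
rewrite -big_split /=; apply: eq_big_seq => d dm.
have dd : (d %| m)%N by rewrite dvdn_divisors.
have d0 : (0 < d)%N by apply: dvdn_gt0 dd.
have npd : ~~ (p %| d)%N.
  by apply: contra npm => pd; apply: dvdn_trans dd.
by rewrite expn0 mul1n expn1 mu_pmul // mulNr mulrBr.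
Qed.

Lemma decomp (n : nat) : (1 < n)%N ->
  exists m a, [/\ (0 < m)%N, ~~ (pdiv n %| m)%N, (0 < a)%N & n = (pdiv n ^ a * m)%N].
Proof.
move=> n1; have pp := pdiv_prime n1.
have n0 : (0 < n)%N by apply: ltnW.
have [m cpm nE] := pfactor_coprime pp n0.
exists m, (logn (pdiv n) n); split.
- by move: n0; rewrite nE muln_gt0 => /andP [].
- by rewrite -prime_coprime.
- by rewrite logn_gt0 mem_primes pp n0 pdiv_dvd.
- by rewrite mulnC {1}nE.
Qed.

Lemma divisors1 : divisors 1 = [:: 1%N].
Proof. by []. Qed.

Lemma sum_mu (n : nat) : (0 < n)%N -> \sum_(d <- divisors n) moebius d = (n == 1%N)%:R.
Proof.
case: n => // [[|n]] _; first by rewrite divisors1 big_seq1 mu1.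
have [m [a [m0 npm a0 nE]]] := @decomp n.+2 isT.
have pp := pdiv_prime (isT : (1 < n.+2)%N).
have -> : \sum_(d <- divisors n.+2) moebius d = \sum_(d <- divisors n.+2) moebius d * 1.
  by apply: eq_bigr => d _; rewrite mulr1.
rewrite (_ : (n.+2 == 1%N)%:R = 0) // nE (mu_split (fun _ => 1)) //.
by rewrite big1 // => d _; rewrite subrr mulr0.
Qed.

From mathcomp Require Import ring.

Section Main.
Variables (f h : nat -> algC).
Hypothesis hLadd : L_additive_wrt f h.
Hypothesis hnz : forall n : nat, (0 < n)%N -> h n != 0.

Let g d := f d / h d.

Lemma gM m n : (0 < m)%N -> (0 < n)%N -> g (m * n) = g m + g n.
Proof.
move=> m0 n0; have [[_ hM] fM] := hLadd.
rewrite /g fM // hM //.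
have := hnz _ m0; have := hnz _ n0; move=> Hn Hm.
by field; apply/andP; split.
Qed.

Lemma g1 : g 1 = 0.
Proof.
have [[h1 _] fM] := hLadd.
have := fM 1%N 1%N isT isT; rewrite h1 mulr1 => E.
rewrite /g; suff -> : f 1%N = 0 by rewrite mul0r.
rewrite muln1 in E; by apply: (@addrI _ (f 1%N)); rewrite addr0 -E.
Qed.

Lemma S_eq n : (0 < n)%N ->
  \sum_(d <- divisors n) moebius d * g d = - vonMangoldt_f f h n.
Proof.
case: n => // [[|n]] _.
  by rewrite divisors1 big_seq1 g1 mulr0 /vonMangoldt_f /= oppr0.
have [m [a [m0 npm a0 nE]]] := @decomp n.+2 isT.
have pp := pdiv_prime (isT : (1 < n.+2)%N).
have p0 := prime_gt0 pp.
rewrite {1}nE mu_split //.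
have -> : \sum_(d <- divisors m) moebius d * (g d - g (pdiv n.+2 * d)%N)
        = (\sum_(d <- divisors m) moebius d) * - g (pdiv n.+2).
  rewrite big_distrl /=; apply: eq_big_seq => d dm.
  have d0 : (0 < d)%N by move: dm; rewrite -dvdn_divisors // => /dvdn_gt0; apply.
  by rewrite gM // opprD addrCA subrr addr0.
rewrite sum_mu // /vonMangoldt_f /=.
case: (eqVneq m 1%N) => [m1|m1].
  have -> : size (primes n.+2) == 1%N.
    by rewrite nE m1 muln1 primesX // primes_prime.
  by rewrite (_ : true%:R = 1 :> algC) ?mul1r.
have -> : size (primes n.+2) == 1%N = false.
  have m1' : (1 < m)%N by rewrite ltn_neqAle eq_sym m1 m0.
  have pm := pdiv_prime m1'.
  have i1 : pdiv m \in primes n.+2.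
    by rewrite mem_primes pm /= nE dvdn_mull // pdiv_dvd.
  have i2 : pdiv n.+2 \in primes n.+2.
    by rewrite mem_primes pp /= pdiv_dvd.
  case E: (primes n.+2) i1 i2 => [|q [|r s]] //; rewrite !mem_seq1 => /eqP e1 /eqP e2.
  by move: npm; rewrite e2 -e1 pdiv_dvd.
by rewrite (_ : false%:R = 0 :> algC) ?mul0r ?oppr0.
Qed.

End Main.

Theorem theorem2p2 (f h : nat -> algC)
  (hLadd : L_additive_wrt f h)
  (hnz : forall n : nat, (0 < n)%N -> h n != 0) :
  forall n : nat, (0 < n)%N ->
    (vonMangoldt_f f h n
       = \sum_(d <- divisors n) moebius (n %/ d)%N * (f d / h d) /\
     vonMangoldt_f f h n
       = - \sum_(d <- divisors n) moebius d * f d / h d) /\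
    (vonMangoldt_f f h n = dconv moebius (fun d => f d / h d) n /\
     vonMangoldt_f f h n
       = - dconv const1 (fun d => moebius d * f d / h d) n).
Proof.
move=> n n0.
have S := S_eq f h hLadd hnz n n0.
have gM' := gM f h hLadd hnz.
have g1' := g1 f h hLadd.
have L : vonMangoldt_f f h n = - \sum_(d <- divisors n) moebius d * f d / h d.
  rewrite (eq_bigr (fun d => moebius d * (f d / h d))) ?S ?opprK // => d _.
  by rewrite mulrA.
have T : dconv moebius (fun d => f d / h d) n = vonMangoldt_f f h n.
  rewrite /dconv.
  transitivity (\sum_(d <- divisors n) moebius d * (f n / h n - f d / h d)).
    apply: eq_big_seq => d dn; congr (_ * _).
    have dd : (d %| n)%N by rewrite dvdn_divisors.
    have d0 : (0 < d)%N by apply: dvdn_gt0 dd.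
    have q0 : (0 < n %/ d)%N by rewrite divn_gt0 // dvdn_leq.
    have := gM' d (n %/ d)%N d0 q0; rewrite mulnC divnK // => ->.
    by rewrite addrAC subrr add0r.
  rewrite (eq_bigr (fun d => moebius d * (f n / h n) - moebius d * (f d / h d)));
    last by move=> d _; rewrite mulrBr.
  rewrite big_split /= -big_distrl /= sum_mu // sumrN S opprK.
  case: eqP => [->|_]; first by rewrite g1' mulr0 add0r.
  by rewrite mul0r add0r.
split; split => //.
- rewrite -T /dconv -(divisors_rev _ n n0); apply: eq_big_seq => d dn.
  have dd : (d %| n)%N by rewrite dvdn_divisors.
  by rewrite divnKK.
- rewrite L /dconv; congr (- _).
  rewrite -(divisors_rev (fun d => moebius d * f d / h d) n n0).
  by apply: eq_bigr => d _; rewrite /const1 mul1r.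
Qed.
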